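(* Let $H=(V,E)$ be a hypergraph whose vertex set $V$ is a partition of $[n]$ into sets of cardinality at least $2$, and suppose $H$ is downward-closed (for every $e\in E$ and every $e'\subseteq e$ with $|e'|>1$, $e'\in E$). Let $D=\{\bar i_I\}_{I\in V}$ with $\bar i_I\in I$ for each $I\in V$. Let $a\cdot w\le\delta$ ($a\in\mathbb{R}^{\mathcal{J}^H}$, $\delta\in\mathbb{R}$) be a valid inequality for $\mathrm{MC}^H$ such that $\{J\in\mathcal{J}^H: a_J\ne 0\}\subseteq\mathcal{J}^H_\le(D)$. Then $a\cdot w\le\delta$ is facet-inducing for $\mathrm{MC}^H$ if and only if $\operatorname{proj}_{\mathcal{J}^H_\le(D)}a\cdot v\le\delta$ is facet-inducing for $\mathrm{MC}^H_\le(D)$.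
   Context: Let $n$ be a positive integer, $[n]=\{1,\dots,n\}$. A hypergraph $H=(V,E)$ here has as vertex set $V$ a family of pairwise disjoint subsets of $[n]$, each of cardinality at least $2$, and hyperedge set $E$ consisting of subsets $e\subseteq V$ with $|e|\ge 2$. Write $L(V)=\{\{I\}: I\in V\}$. For a nonempty $e\subseteq V$, $\mathcal{J}^e$ denotes the family of sets $J\subseteq \bigcup_{I\in e} I$ with $|J\cap I|=1$ for every $I\in e$. Let $\mathcal{J}^H=\bigcup_{e\in L(V)\cup E}\mathcal{J}^e$. For a vector $w$ indexed by sets, write $w_i=w_{\{i\}}$ and $w(A)=\sum_{i\in A}w_i$. Let $\mathscr{S}^H=\{w\in\{0,1\}^{\mathcal{J}^H}: w(I)=1\ \forall I\in V;\ w_J=\prod_{i\in J}w_i\ \forall J\in\mathcal{J}^H, |J|>1\}$ and $\mathrm{MC}^H=\operatorname{conv}\mathscr{S}^H$. For $D$ as in the claim, $\mathcal{J}^H_\le(D)=\{J\in\mathcal{J}^H: J\subseteq[n]\setminus D\}$ and $\mathrm{MC}^H_\le(D)=\operatorname{conv}\{v\in\{0,1\}^{\mathcal{J}^H_\le(D)}: v(I\setminus D)\le 1\ \forall I\in V;\ v_J=\prod_{i\in J}v_i\ \forall J\in\mathcal{J}^H_\le(D), |J|>1\}$. $\operatorname{proj}_{S'}$ extracts coordinates indexed by $S'$. *)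

(* Defs.v *)
From HB Require Import structures.
From mathcomp Require Import all_boot all_order all_algebra.
From mathcomp Require Import reals.
Set Implicit Arguments. Unset Strict Implicit. Unset Printing Implicit Defensive.
Import Order.TTheory GRing.Theory Num.Theory.
Local Open Scope ring_scope.

Section Polyhedra.
Variable R : realType.
Variable K : finType.
Notation vec := {ffun K -> R}.

Definition dotv (a w : vec) : R := \sum_k a k * w k.

Definition conv (S : vec -> Prop) (x : vec) : Prop :=
  exists (m : nat) (p : 'I_m -> vec) (l : 'I_m -> R),
    [/\ (forall i, S (p i)), (forall i, 0 <= l i), \sum_i l i = 1
      & forall k, x k = \sum_i l i * p i k].

Definition lin_indep (s : seq vec) : Prop :=
  forall c : 'I_(size s) -> R,
    (forall k, \sum_i c i * (s`_i) k = 0) -> forall i, c i = 0.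

Definition aff_indep (s : seq vec) : Prop :=
  match s with
  | [::] => True
  | p0 :: ps => lin_indep [seq [ffun k => p k - p0 k] : {ffun K -> R} | p : {ffun K -> R} <- ps]
  end.

(* X has (affine) dimension d (d = -1 iff X is empty):
   the maximal number of affinely independent points of X is d + 1 *)
Definition has_dim (X : vec -> Prop) (d : int) : Prop :=
  (exists s : seq vec, (forall x, x \in s -> X x) /\ aff_indep s
                       /\ (size s)%:Z = d + 1)
  /\ (forall s : seq vec, (forall x, x \in s -> X x) -> aff_indep s ->
         (size s)%:Z <= d + 1).

Definition valid_ineq (P : vec -> Prop) (a : vec) (delta : R) : Prop :=
  forall x, P x -> dotv a x <= delta.

Definition facet_inducing (P : vec -> Prop) (a : vec) (delta : R) : Prop :=
  valid_ineq P a delta /\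
  exists d : int, has_dim P d /\
                  has_dim (fun x => P x /\ dotv a x = delta) (d - 1).

End Polyhedra.

(* [n] = {1..n} is represented by 'I_n = {0..n-1}. *)
Section Hyper.
Variable n : nat.
Notation elt := 'I_n.

Definition Jfam (e : {set {set elt}}) (J : {set elt}) : bool :=
  (J \subset cover e) && [forall I in e, #|J :&: I| == 1].

Definition LV (V : {set {set elt}}) : {set {set {set elt}}} :=
  [set [set I] | I in V].

Definition JH (V : {set {set elt}}) (E : {set {set {set elt}}}) : {set {set elt}} :=
  [set J | [exists e, (e \in LV V :|: E) && Jfam e J]].

Definition JHle V E (D : {set elt}) : {set {set elt}} :=
  [set J in JH V E | J \subset ~: D].

Definition idx (A : {set {set elt}}) := {J : {set elt} | J \in A}.

Variable R : realType.

(* w_J, extended by 0 outside the index family *)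
Definition coord (A : {set {set elt}}) (w : {ffun idx A -> R}) (J : {set elt}) : R :=
  if insub J is Some j then w j else 0.

Definition wi (A : {set {set elt}}) (w : {ffun idx A -> R}) (i : elt) : R :=
  coord w [set i].

Definition SH V E (w : {ffun idx (JH V E) -> R}) : Prop :=
  [/\ (forall J, w J = 0 \/ w J = 1),
      (forall I, I \in V -> \sum_(i in I) wi w i = 1)
    & (forall J : idx (JH V E), (1 < #|val J|)%N -> w J = \prod_(i in val J) wi w i)].

Definition MCH V E : {ffun idx (JH V E) -> R} -> Prop := conv (@SH V E).

Definition SHle V E D (v : {ffun idx (JHle V E D) -> R}) : Prop :=
  [/\ (forall J, v J = 0 \/ v J = 1),
      (forall I, I \in V -> \sum_(i in I :\: D) wi v i <= 1)
    & (forall J : idx (JHle V E D), (1 < #|val J|)%N -> v J = \prod_(i in val J) wi v i)].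

Definition MCHle V E D : {ffun idx (JHle V E D) -> R} -> Prop := conv (@SHle V E D).

Definition projle V E D (a : {ffun idx (JH V E) -> R}) : {ffun idx (JHle V E D) -> R} :=
  [ffun J => coord a (val J)].

End Hyper.

Arguments SH {n R} V E w.
Arguments SHle {n R} V E D v.
Arguments MCH {n R} V E _.
Arguments MCHle {n R} V E D _.
Arguments projle {n R} V E D a.

(* Main.v *)
Require Import Defs.
From HB Require Import structures.
From mathcomp Require Import all_boot all_order all_algebra.
From mathcomp Require Import reals.
From mathcomp Require Import ring zify.
Import Order.TTheory GRing.Theory Num.Theory.
Local Open Scope ring_scope.

Definition affmap (R : realType) (K1 K2 : finType)
  (f : {ffun K1 -> R} -> {ffun K2 -> R}) : Prop :=
  exists (M : K2 -> K1 -> R) (b : K2 -> R),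
    forall x k, f x k = \sum_j M k j * x j + b k.

Arguments affmap {R K1 K2} f.

Lemma lin_indepE (R : realType) (K : finType) (s : seq {ffun K -> R}) :
  lin_indep s <->
  (forall c : nat -> R, (forall k, \sum_(0 <= i < size s) c i * s`_i k = 0) ->
     forall i, (i < size s)%N -> c i = 0).
Proof.
rewrite /lin_indep; split.
- move=> H c Hc i Hi.
  apply: (H (fun j => c (nat_of_ord j)) _ (Ordinal Hi)).
  by move=> k; have := Hc k; rewrite big_mkord.
- move=> H c Hc i.
  pose c' := fun j : nat => oapp c 0 (insub j : option 'I_(size s)).
  have Ec : forall j : 'I_(size s), c' j = c j by move=> j; rewrite /c' valK.
  rewrite -Ec; apply: H => //.
  move=> k; rewrite big_mkord -[RHS](Hc k); apply: eq_bigr => j _; by rewrite Ec.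
Qed.

Lemma indep_map (R : realType) (K1 K2 : finType)
  (f : {ffun K1 -> R} -> {ffun K2 -> R}) (g : {ffun K2 -> R} -> {ffun K1 -> R})
  (s : seq {ffun K1 -> R}) :
  affmap g -> (forall x, x \in s -> g (f x) = x) ->
  aff_indep s -> aff_indep (map f s).
Proof.
case: s => [|p0 ps] //= [M [b Hg]] Hgf.
rewrite !lin_indepE !size_map => H c Hc i Hi.
apply: H Hi => k.
have E : forall x, x \in p0 :: ps -> x k = \sum_j M k j * f x j + b k.
  by move=> x Hx; rewrite -Hg Hgf.
transitivity (\sum_(0 <= i < size ps) \sum_j M k j * (c i * ((map f ps)`_i j - f p0 j))).
  apply: eq_big_nat => i0 Hi0.
  rewrite (nth_map 0) ?size_map // ffunE (nth_map 0) //.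
  rewrite (E _ (mem_head _ _)) E; last by rewrite inE mem_nth ?orbT.
  rewrite opprD addrACA subrr addr0 -sumrB mulr_sumr; apply: eq_bigr => j _; ring.
rewrite exchange_big /=; apply: big1 => j _.
rewrite -mulr_sumr; have := Hc j.
move=> Hcj.
rewrite [X in _ * X](_ : _ = 0) ?mulr0 //; rewrite -[RHS]Hcj.
apply: eq_big_nat => i0 Hi0.
by rewrite [in RHS](nth_map 0) ?size_map // ffunE.
Qed.

Lemma has_dim_transfer (R : realType) (K1 K2 : finType)
  (X : {ffun K1 -> R} -> Prop) (Y : {ffun K2 -> R} -> Prop)
  (f : {ffun K1 -> R} -> {ffun K2 -> R}) (g : {ffun K2 -> R} -> {ffun K1 -> R}) d :
  affmap f -> affmap g -> (forall x, X x -> Y (f x)) -> (forall y, Y y -> X (g y)) ->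
  (forall x, X x -> g (f x) = x) -> (forall y, Y y -> f (g y) = y) ->
  has_dim X d -> has_dim Y d.
Proof.
move=> Hf Hg HXY HYX Hgf Hfg [[s [Hs [Hi Hsz]]] Hmax]; split.
  exists (map f s); split; first by move=> x /mapP [y Hy ->]; apply: HXY; apply: Hs.
  split; last by rewrite size_map.
  by apply: (@indep_map _ _ _ f g s Hg) Hi => x Hx; apply: Hgf; apply: Hs.
move=> t Ht Hit; rewrite -(size_map g); apply: Hmax.
  by move=> x /mapP [y Hy ->]; apply: HYX; apply: Ht.
by apply: (@indep_map _ _ _ g f t Hf) Hit => y Hy; apply: Hfg; apply: Ht.
Qed.

Lemma aff_conv (R : realType) (K1 K2 : finType)
  (f : {ffun K1 -> R} -> {ffun K2 -> R}) m (p : 'I_m -> {ffun K1 -> R}) (l : 'I_m -> R) (x : {ffun K1 -> R}) :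
  affmap f -> \sum_i l i = 1 -> (forall k, x k = \sum_i l i * p i k) ->
  forall k, f x k = \sum_i l i * f (p i) k.
Proof.
move=> [M [b H]] Hl Hx k.
rewrite H.
under [RHS]eq_bigr do rewrite H mulrDr.
rewrite big_split /= -mulr_suml Hl mul1r; congr (_ + _).
under eq_bigr do rewrite Hx mulr_sumr.
rewrite exchange_big /=; apply: eq_bigr => i _.
rewrite mulr_sumr; apply: eq_bigr => j _; ring.
Qed.

Set Implicit Arguments. Unset Strict Implicit.

Lemma coordE (n : nat) (R : realType) (A : {set {set 'I_n}}) (x : {ffun idx A -> R}) (j : idx A) :
  Defs.coord x (val j) = x j.
Proof. by rewrite /Defs.coord valK. Qed.

Lemma coordS (n : nat) (R : realType) (A : {set {set 'I_n}}) (x : {ffun idx A -> R}) J (HJ : J \in A) :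
  Defs.coord x J = x (Sub J HJ).
Proof. by rewrite /Defs.coord insubT. Qed.

Lemma coord0 (n : nat) (R : realType) (A : {set {set 'I_n}}) (x : {ffun idx A -> R}) J :
  J \notin A -> Defs.coord x J = 0.
Proof. by move=> HJ; rewrite /Defs.coord insubF //; apply/negbTE. Qed.

Lemma sum_idx (n : nat) (R : realType) (A : {set {set 'I_n}}) (F : {set 'I_n} -> R) :
  \sum_(j : idx A) F (val j) = \sum_(S in A) F S.
Proof. by rewrite (big_sub (mem A)). Qed.

Lemma sum_pick (n : nat) (R : realType) (A : {set {set 'I_n}}) (x : {ffun idx A -> R}) J :
  J \in A -> \sum_(j : idx A) (val j == J)%:R * x j = Defs.coord x J.
Proof.
move=> HJ; rewrite (bigD1 (Sub J HJ)) //= eqxx mul1r big1 ?addr0 ?coordS //.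
move=> j Hj; case: eqP => [E|]; last by rewrite mul0r.
by move: Hj; rewrite -val_eqE /= E eqxx.
Qed.

Definition Hyps n (V : {set {set 'I_n}}) (E : {set {set {set 'I_n}}})
  (ibar : {set 'I_n} -> 'I_n) : Prop :=
  [/\ partition V [set: 'I_n],
      (forall e, e \in E -> e \subset V /\ (1 < #|e|)%N),
      (forall e e' : {set {set 'I_n}}, e \in E -> e' \subset e -> (1 < #|e'|)%N -> e' \in E)
    & (forall I, I \in V -> ibar I \in I)].

Lemma same_block n V E ibar (I1 I2 : {set 'I_n}) x :
  Hyps V E ibar -> I1 \in V -> I2 \in V -> x \in I1 -> x \in I2 -> I1 = I2.
Proof.
case=> Hp _ _ _ H1 H2 x1 x2.
have Ht := partition_trivIset Hp.
by rewrite -(def_pblock Ht H1 x1) (def_pblock Ht H2 x2).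
Qed.

Lemma pblockV n V E ibar (i : 'I_n) :
  Hyps V E ibar -> pblock V i \in V /\ i \in pblock V i.
Proof.
case=> Hp _ _ _; case/and3P: Hp => /eqP Hc _ _.
by rewrite pblock_mem ?mem_pblock Hc inE.
Qed.

Lemma inD n V E ibar (I : {set 'I_n}) i :
  Hyps V E ibar -> I \in V -> i \in I -> (i \in ibar @: V) = (i == ibar I).
Proof.
move=> H HI Hi; case: (H) => _ _ _ Hb.
apply/imsetP/eqP => [[I' HI' Ei]|->]; last by exists I.
rewrite Ei in Hi *.
by rewrite (same_block H HI HI' Hi (Hb _ HI')).
Qed.

Lemma JHP n V E (J : {set 'I_n}) :
  reflect (exists e, e \in LV V :|: E /\ Jfam e J) (J \in JH V E).
Proof.
rewrite inE; apply: (iffP existsP) => [[e /andP [H1 H2]]|[e [H1 H2]]]; exists e => //.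
by rewrite H1 H2.
Qed.

Lemma e_sub n V E ibar (e : {set {set 'I_n}}) :
  Hyps V E ibar -> e \in LV V :|: E -> e \subset V /\ e != set0.
Proof.
case=> _ HE _ _; rewrite inE => /orP [/imsetP [I HI ->]|He].
  split; first by rewrite sub1set.
  by apply/set0Pn; exists I; rewrite inE.
have [Hs Hc] := HE e He; split => //.
by rewrite -card_gt0 (leq_trans _ Hc).
Qed.

Lemma JH_single n V E ibar (i : 'I_n) :
  Hyps V E ibar -> [set i] \in JH V E.
Proof.
move=> H; have [HB Hi] := pblockV i H.
apply/JHP; exists [set pblock V i]; split.
  by rewrite inE; apply/orP; left; apply/imsetP; exists (pblock V i).
rewrite /Jfam cover1 sub1set Hi /=.
apply/forall_inP => I; rewrite inE => /eqP ->.
by apply/cards1P; exists i; apply/setP => x; rewrite !inE; case: eqP => // ->.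
Qed.

Lemma JH_n0 n V E ibar (J : {set 'I_n}) :
  Hyps V E ibar -> J \in JH V E -> J != set0.
Proof.
move=> H /JHP [e [He /andP [_ /forall_inP Hf]]].
have [_ /set0Pn [I HI]] := e_sub H He.
have := Hf I HI; apply: contraL => /eqP ->.
by rewrite set0I cards0.
Qed.

Lemma JH_step n V E ibar (J : {set 'I_n}) k :
  Hyps V E ibar -> J \in JH V E -> k \in J ->
  exists I, [/\ I \in V, k \in I, J :&: I = [set k],
     (J :\ k == set0) || (J :\ k \in JH V E)
   & forall i, i \in I -> i != k -> i |: (J :\ k) \in JH V E].
Proof.
move=> H /JHP [e [He /andP [Hsub /forall_inP Hf]]] Hk.
have [HeV _] := e_sub H He.
have /bigcupP [I HIe HkI] : k \in cover e by apply: (subsetP Hsub).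
have HIV : I \in V by apply: (subsetP HeV).
have HJI : J :&: I = [set k].
  have /cards1P [x Ex] := Hf I HIe.
  have : k \in J :&: I by rewrite inE Hk HkI.
  by rewrite Ex inE => /eqP <-.
have knot : forall I1, I1 \in e -> I1 != I -> k \notin I1.
  move=> I1 HI1 Hne; apply/negP => Hk1.
  move/eqP: Hne; apply; apply: (same_block H) Hk1 HkI => //; exact: (subsetP HeV).
have JIk : forall x, x \in J -> x \in I -> x = k.
  move=> x Hx HxI; have : x \in J :&: I by rewrite inE Hx HxI.
  by rewrite HJI inE => /eqP.
exists I; split => //.
- move: He; rewrite inE => /orP [/imsetP [I0 HI0 Ee]| HeE].
  + apply/orP; left.
    apply/eqP/setP => x; rewrite !inE; apply/negbTE/negP => /andP [Hxk HxJ].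
    have: x \in cover e by apply: (subsetP Hsub).
    rewrite Ee cover1 => HxI0.
    move: HIe; rewrite Ee inE => /eqP EI; rewrite -EI in HxI0.
    by rewrite (JIk x HxJ HxI0) eqxx in Hxk.
  + apply/orP; right; apply/JHP; exists (e :\ I); split.
    * have [_ HE Hd _] := H.
      have [_ Hc] := HE e HeE.
      have Hc' : #|e| = #|e :\ I|.+1 by rewrite (cardsD1 I e) HIe.
      case: (ltnP 1 #|e :\ I|) => Hlt.
      - rewrite inE; apply/orP; right; apply: Hd HeE _ Hlt; exact: subsetDl.
      - have /cards1P [I' EI'] : #|e :\ I| == 1%N by apply/eqP; lia.
        rewrite inE; apply/orP; left; apply/imsetP; exists I'; last by [].
        have : I' \in e :\ I by rewrite EI' inE.
        rewrite inE => /andP [_ HI'e]; exact: (subsetP HeV).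
    * rewrite /Jfam; apply/andP; split.
      - apply/subsetP => x; rewrite !inE => /andP [Hxk HxJ].
        have /bigcupP [I1 HI1 HxI1] := subsetP Hsub x HxJ.
        apply/bigcupP; exists I1 => //; rewrite !inE HI1 andbT.
        apply/negP => /eqP E1; rewrite E1 in HxI1.
        by rewrite (JIk x HxJ HxI1) eqxx in Hxk.
      - apply/forall_inP => I1; rewrite !inE => /andP [Hne HI1].
        have -> : (J :\ k) :&: I1 = J :&: I1.
          apply/setP => x; rewrite !inE.
          case: (boolP (x \in I1)) => HxI1; rewrite ?andbF ?andbT //.
          case: eqP => [Exk|//]; rewrite Exk in HxI1.
          by rewrite (negbTE (knot I1 HI1 Hne)) in HxI1.
        exact: Hf.
- move=> i HiI Hik; apply/JHP; exists e; split => //; apply/andP; split.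
  + apply/subsetP => x; rewrite !inE => /orP [/eqP ->|/andP [_ HxJ]].
    * by apply/bigcupP; exists I.
    * exact: (subsetP Hsub).
  + apply/forall_inP => I1 HI1; case: (eqVneq I1 I) => [->|Hne].
    * apply/cards1P; exists i; apply/setP => x; rewrite !inE.
      case: (eqVneq x i) => [->|Hxi] /=; first by rewrite HiI.
      apply/negP => /andP [/andP [Hxk HxJ] HxI].
      by rewrite (JIk x HxJ HxI) eqxx in Hxk.
    * have -> : (i |: (J :\ k)) :&: I1 = J :&: I1.
        apply/setP => x; rewrite !inE.
        case: (boolP (x \in I1)) => HxI1; rewrite ?andbF ?andbT //.
        case: (eqVneq x i) => [Exi|Hxi] /=.
          rewrite Exi in HxI1; exfalso; move/eqP: Hne; apply.
          apply: (same_block H) HxI1 HiI => //; exact: (subsetP HeV).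
        case: (eqVneq x k) => [Exk|] //=.
        by rewrite Exk (negbTE (knot I1 HI1 Hne)) in HxI1.
      exact: Hf.
Qed.

Definition ev n (R : realType) (A : {set {set 'I_n}}) (w : {ffun idx A -> R}) (J : {set 'I_n}) : R :=
  \prod_(i in J) wi w i.

Lemma SH_ev n (V : {set {set 'I_n}}) E ibar (R : realType) (w : {ffun idx (JH V E) -> R}) (J : {set 'I_n}) :
  Hyps V E ibar -> SH V E w -> J \in JH V E -> Defs.coord w J = ev w J.
Proof.
move=> H [_ _ Hp] HJ; case: (ltnP 1 #|J|) => Hc.
  by rewrite (coordS w HJ) (Hp (Sub J HJ) Hc).
have /cards1P [j Ej] : #|J| == 1%N by rewrite eqn_leq Hc card_gt0 (JH_n0 H HJ).
by rewrite Ej /ev big_set1.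
Qed.

Lemma ev_step n V E (R : realType) (w : {ffun idx (JH V E) -> R}) (I J : {set 'I_n}) k :
  SH V E w -> I \in V -> k \in I -> J :&: I = [set k] ->
  ev w J = ev w (J :\ k) - \sum_(i in I :\ k) ev w (i |: (J :\ k)).
Proof.
move=> [_ Hs _] HI HkI HJI.
have HkJ : k \in J by have := set11 k; rewrite -HJI inE => /andP [].
have Hk : wi w k = 1 - \sum_(i in I :\ k) wi w i.
  by rewrite -(Hs I HI) (big_setD1 k HkI) /= addrK.
rewrite /ev (big_setD1 k HkJ) /= Hk mulrBl mul1r mulr_suml; congr (_ - _).
apply: eq_bigr => i; rewrite !inE => /andP [Hik HiI].
rewrite big_setU1 //= !inE negb_and negbK (negbTE Hik) /=.
apply/negP => HiJ; have : i \in J :&: I by rewrite inE HiJ HiI.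
by rewrite HJI inE (negbTE Hik).
Qed.

Definition affexp n (R : realType) V E (D : {set 'I_n})
  (g : {ffun idx (JH V E) -> R} -> R) : Prop :=
  exists (m : {ffun idx (JHle V E D) -> R}) (b : R),
    forall w, SH V E w -> g w = dotv m (projle V E D w) + b.

Lemma affexp_ext n (R : realType) V E (D : {set 'I_n}) (g1 g2 : {ffun idx (JH V E) -> R} -> R) :
  (forall w, SH V E w -> g1 w = g2 w) -> affexp D g1 -> affexp D g2.
Proof. by move=> Hg [m [b Hm]]; exists m, b => w Hw; rewrite -Hg // Hm. Qed.

Lemma affexp_const n (R : realType) V E (D : {set 'I_n}) (c : R) :
  affexp (V:=V) (E:=E) D (fun _ => c).
Proof.
exists 0, c => w _; rewrite /dotv big1 ?add0r // => j _; by rewrite ffunE mul0r.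
Qed.

Lemma affexp_sub n (R : realType) V E (D : {set 'I_n}) (g1 g2 : {ffun idx (JH V E) -> R} -> R) :
  affexp D g1 -> affexp D g2 -> affexp D (fun w => g1 w - g2 w).
Proof.
move=> [m1 [b1 H1]] [m2 [b2 H2]]; exists (m1 - m2), (b1 - b2) => w Hw.
rewrite H1 // H2 // /dotv.
have -> : \sum_k (m1 - m2) k * projle V E D w k =
   \sum_k m1 k * projle V E D w k - \sum_k m2 k * projle V E D w k.
  by rewrite -sumrB; apply: eq_bigr => k _; rewrite !ffunE mulrBl.
ring.
Qed.

Lemma affexp_sum n (R : realType) V E (D : {set 'I_n}) (I : finType) (A : {set I})
  (F : I -> {ffun idx (JH V E) -> R} -> R) :
  (forall i, i \in A -> affexp D (F i)) -> affexp D (fun w => \sum_(i in A) F i w).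
Proof.
move=> HF.
have : forall i, exists mb : {ffun idx (JHle V E D) -> R} * R,
    i \in A -> forall w, SH V E w -> F i w = dotv mb.1 (projle V E D w) + mb.2.
  move=> i; case: (boolP (i \in A)) => Hi; last by exists (0, 0).
  by have [m [b Hm]] := HF i Hi; exists (m, b).
case/fin_all_exists => fm Hfm.
exists (\sum_(i in A) (fm i).1), (\sum_(i in A) (fm i).2) => w Hw.
rewrite /dotv.
under [X in _ = X + _]eq_bigr do rewrite sum_ffunE mulr_suml.
rewrite exchange_big /= -big_split /=; apply: eq_bigr => i Hi.
by rewrite (Hfm i Hi w Hw).
Qed.

Lemma coord_proj n (R : realType) V E (D : {set 'I_n}) (w : {ffun idx (JH V E) -> R}) J :
  J \in JHle V E D -> Defs.coord (projle V E D w) J = Defs.coord w J.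
Proof. by move=> HJ; rewrite (coordS _ HJ) ffunE. Qed.

Lemma coord_proj0 n (R : realType) V E (D : {set 'I_n}) (w : {ffun idx (JH V E) -> R}) J :
  J \notin JHle V E D -> Defs.coord (projle V E D w) J = 0.
Proof. exact: coord0. Qed.

Lemma affexp_coordle n (R : realType) V E (D : {set 'I_n}) J :
  J \in JHle V E D -> affexp D (fun w : {ffun idx (JH V E) -> R} => Defs.coord w J).
Proof.
move=> HJ; exists [ffun j => (val j == J)%:R], 0 => w _.
rewrite addr0 /dotv.
under eq_bigr do rewrite ffunE.
by rewrite sum_pick // coord_proj.
Qed.

Lemma affexp_ev n (V : {set {set 'I_n}}) E ibar (R : realType) k (J : {set 'I_n}) :
  Hyps V E ibar -> (#|J :&: (ibar @: V)| <= k)%N -> (J == set0) || (J \in JH V E) ->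
  affexp (R:=R) (V:=V) (E:=E) (ibar @: V) (fun w => ev w J).
Proof.
move=> H.
set D := ibar @: V.
have base : forall J0 : {set 'I_n}, J0 :&: D = set0 -> (J0 == set0) || (J0 \in JH V E) ->
    affexp (R:=R) (V:=V) (E:=E) D (fun w => ev w J0).
  move=> J0 H0 /orP [/eqP ->|HJ0].
    apply: (@affexp_ext _ _ _ _ _ (fun _ => 1)); last exact: affexp_const.
    by move=> w _; rewrite /ev big_set0.
  have HJle : J0 \in JHle V E D by rewrite inE HJ0 /= -disjoints_subset -setI_eq0 H0.
  apply: (@affexp_ext _ _ _ _ _ (fun w => Defs.coord w J0)); last exact: affexp_coordle.
  move=> w Hw; exact: (SH_ev H).
elim: k J => [|k IH] J Hc HJ.
  by apply: base => //; apply/eqP; rewrite -cards_eq0 -leqn0.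
case: (set_0Vmem (J :&: D)) => [H0|[k0 Hk0]]; first exact: base.
move: (Hk0); rewrite inE => /andP [Hk0J Hk0D].
have HJJ : J \in JH V E.
  case/orP: HJ => // /eqP EJ; by rewrite EJ inE in Hk0J.
have [I [HI Hk0I HJI HJ' Hi]] := JH_step H HJJ Hk0J.
have Ek0 : k0 = ibar I by apply/eqP; rewrite -(inD H HI Hk0I).
have HiD : forall i, i \in I :\ k0 -> i \notin D.
  move=> i; rewrite !inE => /andP [Hik HiI]; rewrite (inD H HI HiI) -Ek0 //.
have HcJ' : (#|(J :\ k0) :&: D| <= k)%N.
  move: Hc; rewrite setIDAC (cardsD1 k0 (J :&: D)) Hk0.
  by rewrite add1n ltnS.
apply: (@affexp_ext _ _ _ _ _
   (fun w => ev w (J :\ k0) - \sum_(i in I :\ k0) ev w (i |: (J :\ k0)))).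
  by move=> w Hw; rewrite (ev_step Hw HI Hk0I HJI).
apply: affexp_sub; first exact: IH.
apply: (@affexp_sum _ _ _ _ _ _ _ (fun i w => ev w (i |: (J :\ k0)))) => i Hi0.
apply: IH; last first.
  have /setD1P [Hik HiI] := Hi0.
  by rewrite Hi ?orbT.
apply: leq_trans HcJ'; apply: subset_leq_card; apply/subsetP => x.
rewrite !inE => /andP [/orP [/eqP Exi|Hx] HxD].
  by move: (HiD i Hi0); rewrite -Exi /D HxD.
by rewrite Hx HxD.
Qed.

Lemma affexp_coord n (V : {set {set 'I_n}}) E ibar (R : realType) (j : idx (JH V E)) :
  Hyps V E ibar -> affexp (R:=R) (V:=V) (E:=E) (ibar @: V) (fun w => w j).
Proof.
move=> H.
apply: (@affexp_ext _ _ _ _ _ (fun w => ev w (val j))).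
  by move=> w Hw; rewrite -(SH_ev H Hw (valP j)) coordE.
apply: (@affexp_ev _ _ _ _ R #|val j :&: (ibar @: V)| (val j) H) => //.
by rewrite (valP j) orbT.
Qed.

Definition bin (R : realType) (x : R) := x = 0 \/ x = 1.

Lemma bin_ge0 (R : realType) (x : R) : bin x -> 0 <= x.
Proof. by case=> ->. Qed.

Lemma coord_bin n (R : realType) (A : {set {set 'I_n}}) (w : {ffun idx A -> R}) J :
  (forall j, bin (w j)) -> bin (Defs.coord w J).
Proof.
move=> Hw; rewrite /Defs.coord; case: insubP => [j _ _|_]; first exact: Hw.
by left.
Qed.

Lemma prod_bin (R : realType) (I : finType) (A : {set I}) (F : I -> R) :
  (forall i, i \in A -> bin (F i)) -> bin (\prod_(i in A) F i).
Proof.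
move=> HF; apply: (big_ind (fun x : R => bin x)) => //; first by right.
by move=> x y [->|->] [->|->]; rewrite ?mulr0 ?mul0r ?mulr1; [left|left|left|right].
Qed.

Lemma sum_bin (R : realType) (I : finType) (A : {set I}) (F : I -> R) :
  (forall i, i \in A -> bin (F i)) -> \sum_(i in A) F i <= 1 -> bin (\sum_(i in A) F i).
Proof.
move=> HF Hle.
case: (boolP [exists i, (i \in A) && (F i == 1)]).
  case/existsP => i /andP [HiA /eqP Hi]; right.
  apply/eqP; rewrite eq_le Hle /=.
  rewrite (big_setD1 i HiA) /= Hi lerDl; apply: sumr_ge0 => j.
  rewrite inE => /andP [_ Hj]; exact: bin_ge0 (HF j Hj).
move=> Hn; left; apply: big1 => i Hi.
case: (HF i Hi) => // Hi1; move: Hn; rewrite negb_exists => /forallP /(_ i).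
by rewrite Hi Hi1 eqxx.
Qed.

Lemma JHle_single n V E ibar (i : 'I_n) :
  Hyps V E ibar -> i \notin ibar @: V -> [set i] \in JHle V E (ibar @: V).
Proof.
move=> H Hi; rewrite inE (JH_single i H) /= sub1set inE //.
Qed.

Lemma wi_proj n (V : {set {set 'I_n}}) E ibar (R : realType) (w : {ffun idx (JH V E) -> R}) (i : 'I_n) :
  Hyps V E ibar -> i \notin ibar @: V -> wi (projle V E (ibar @: V) w) i = wi w i.
Proof. by move=> H Hi; rewrite /wi coord_proj // JHle_single. Qed.

Definition lv n (R : realType) V E (D : {set 'I_n}) (v : {ffun idx (JHle V E D) -> R}) (i : 'I_n) : R :=
  if i \in D then 1 - \sum_(j in pblock V i :\: D) wi v j else wi v i.

Definition liftv n (R : realType) V E (D : {set 'I_n}) (v : {ffun idx (JHle V E D) -> R}) :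
  {ffun idx (JH V E) -> R} := [ffun j : idx (JH V E) => \prod_(i in val j) lv v i].

Lemma wi_lift n (V : {set {set 'I_n}}) E ibar (R : realType) D (v : {ffun idx (JHle V E D) -> R}) (i : 'I_n) :
  Hyps V E ibar -> wi (liftv v) i = lv v i.
Proof. by move=> H; rewrite /wi (coordS _ (JH_single i H)) ffunE /= big_set1. Qed.

Lemma JHle_JH n (V : {set {set 'I_n}}) E (D : {set 'I_n}) J : J \in JHle V E D -> J \in JH V E.
Proof. by rewrite inE => /andP []. Qed.

Lemma JHle_notD n (V : {set {set 'I_n}}) E (D : {set 'I_n}) J i : J \in JHle V E D -> i \in J -> i \notin D.
Proof. by rewrite inE => /andP [_ /subsetP Hs] /Hs; rewrite inE. Qed.

Lemma P_SH n (V : {set {set 'I_n}}) E ibar (R : realType) (w : {ffun idx (JH V E) -> R}) :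
  Hyps V E ibar -> SH V E w -> SHle V E (ibar @: V) (projle V E (ibar @: V) w).
Proof.
move=> H Hw; have [Hb Hs _] := Hw; split.
- by move=> J; rewrite ffunE; apply: coord_bin.
- move=> I HI.
  rewrite (eq_bigr (fun i => wi w i)); last first.
    by move=> i; rewrite inE => /andP [Hi _]; rewrite (wi_proj _ H).
  rewrite -(Hs I HI) [X in _ <= X](big_setID (ibar @: V)) /= lerDr.
  apply: sumr_ge0 => i _; apply: bin_ge0; exact: coord_bin.
- move=> J HJ; rewrite ffunE (SH_ev H Hw (JHle_JH (valP J))) /ev.
  apply: eq_bigr => i Hi; rewrite (wi_proj _ H) //.
  exact: JHle_notD (valP J) Hi.
Qed.

Lemma lv_bin n (V : {set {set 'I_n}}) E ibar (R : realType) (v : {ffun idx (JHle V E (ibar @: V)) -> R}) (i : 'I_n) :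
  Hyps V E ibar -> SHle V E (ibar @: V) v -> bin (lv v i).
Proof.
move=> H [Hb Hs _]; rewrite /lv; case: ifP => _; last exact: coord_bin.
have [HB _] := pblockV i H.
have : bin (\sum_(j in pblock V i :\: ibar @: V) wi v j).
  apply: sum_bin; last exact: Hs.
  by move=> j _; apply: coord_bin.
by case=> ->; rewrite ?subr0 ?subrr; [right|left].
Qed.

Lemma lift_SH n (V : {set {set 'I_n}}) E ibar (R : realType) (v : {ffun idx (JHle V E (ibar @: V)) -> R}) :
  Hyps V E ibar -> SHle V E (ibar @: V) v -> SH V E (liftv v).
Proof.
move=> H Hv; split.
- move=> j; rewrite ffunE; apply: prod_bin => i _; exact: lv_bin.
- move=> I HI.
  rewrite (eq_bigr (fun i => lv v i)); last by move=> i _; rewrite (wi_lift _ _ H).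
  have [_ _ _ Hib] := H.
  have EID : I :&: ibar @: V = [set ibar I].
    apply/setP => x; rewrite !inE; case: (boolP (x \in I)) => Hx /=.
      by rewrite (inD H HI Hx).
    by apply/esym/negbTE; apply: contraNneq Hx => ->; apply: Hib.
  rewrite (big_setID (ibar @: V)) /= EID big_set1.
  rewrite /lv imset_f //.
  have Ht := partition_trivIset (let: And4 p _ _ _ := H in p).
  rewrite (def_pblock Ht HI (Hib I HI)).
  rewrite (eq_bigr (fun i => wi v i)) ?subrK // => i.
  by rewrite inE => /andP [Hi _]; rewrite (negbTE Hi).
- move=> j Hj; rewrite ffunE; apply: eq_bigr => i _; by rewrite (wi_lift _ _ H).
Qed.

Lemma P_lift n (V : {set {set 'I_n}}) E ibar (R : realType) (v : {ffun idx (JHle V E (ibar @: V)) -> R}) :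
  Hyps V E ibar -> SHle V E (ibar @: V) v -> projle V E (ibar @: V) (liftv v) = v.
Proof.
move=> H [_ _ Hp]; apply/ffunP => J; rewrite ffunE.
have HJ := JHle_JH (valP J).
rewrite (coordS _ HJ) ffunE /=.
rewrite (eq_bigr (fun i => wi v i)); last first.
  by move=> i Hi; rewrite /lv (negbTE (JHle_notD (valP J) Hi)).
case: (ltnP 1 #|val J|) => Hc; first by rewrite Hp.
have /cards1P [j Ej] : #|val J| == 1%N by rewrite eqn_leq Hc card_gt0 (JH_n0 H HJ).
by rewrite Ej big_set1 /wi -Ej coordE.
Qed.

Unset Implicit Arguments. Set Strict Implicit.

Theorem corollary3p5 (R : realType) (n : nat)
  (V : {set {set 'I_n}}) (E : {set {set {set 'I_n}}})
  (ibar : {set 'I_n} -> 'I_n)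
  (a : {ffun idx (JH V E) -> R}) (delta : R) :
  (0 < n)%N ->
  partition V [set: 'I_n] ->
  (forall I : {set 'I_n}, I \in V -> (1 < #|I|)%N) ->
  (forall e : {set {set 'I_n}}, e \in E -> e \subset V /\ (1 < #|e|)%N) ->
  (forall e e' : {set {set 'I_n}}, e \in E -> e' \subset e -> (1 < #|e'|)%N -> e' \in E) ->
  (forall I : {set 'I_n}, I \in V -> ibar I \in I) ->
  valid_ineq (MCH V E) a delta ->
  (forall J : idx (JH V E), a J != 0 -> val J \in JHle V E (ibar @: V)) ->
  facet_inducing (MCH V E) a delta <->
  facet_inducing (MCHle V E (ibar @: V)) (projle V E (ibar @: V) a) delta.
Proof.
move=> _ Hpart _ HE Hdown Hib Hvalid Hsupp.
have H : Hyps V E ibar by split.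
set D := ibar @: V.
set P := projle V E D.
have : forall j : idx (JH V E), exists mb : {ffun idx (JHle V E D) -> R} * R,
    forall w, SH V E w -> w j = dotv mb.1 (P w) + mb.2.
  by move=> j; have [m [b Hm]] := @affexp_coord _ _ _ _ R j H; exists (m, b).
case/fin_all_exists => fm Hfm.
pose T := fun v : {ffun idx (JHle V E D) -> R} =>
  [ffun j : idx (JH V E) => dotv (fm j).1 v + (fm j).2].
have TP : forall w, SH V E w -> T (P w) = w.
  by move=> w Hw; apply/ffunP => j; rewrite ffunE Hfm.
have affP : affmap P.
  exists (fun J j => (val j == val J)%:R), (fun _ => 0) => x J.
  by rewrite addr0 sum_pick ?ffunE //; exact: JHle_JH (valP J).
have affT : affmap T.
  by exists (fun j J => (fm j).1 J), (fun j => (fm j).2) => v j; rewrite ffunE.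
have HXY : forall x, MCH V E x -> MCHle V E D (P x).
  move=> x [m [p [l [Hp Hl Hs Hx]]]]; exists m, (fun i => P (p i)), l; split => //.
    by move=> i; apply: P_SH.
  exact: (@aff_conv _ _ _ P m p l x affP Hs Hx).
have HTy : forall (y : {ffun idx (JHle V E D) -> R}) m (p : 'I_m -> {ffun idx (JHle V E D) -> R}) l,
    (forall i, SHle V E D (p i)) -> \sum_i l i = 1 ->
    (forall k, y k = \sum_i l i * p i k) ->
    forall k, T y k = \sum_i l i * liftv (p i) k.
  move=> y m p l Hp Hs Hy k.
  rewrite (@aff_conv _ _ _ T m p l y affT Hs Hy k); apply: eq_bigr => i _.
  by rewrite -{1}(P_lift H (Hp i)) TP //; apply: lift_SH.
have HYX : forall y, MCHle V E D y -> MCH V E (T y).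
  move=> y [m [p [l [Hp Hl Hs Hy]]]]; exists m, (fun i => liftv (p i)), l; split => //.
    by move=> i; apply: lift_SH.
  exact: HTy.
have Hgf : forall x, MCH V E x -> T (P x) = x.
  move=> x [m [p [l [Hp Hl Hs Hx]]]]; apply/ffunP => k.
  have HPx := @aff_conv _ _ _ P m p l x affP Hs Hx.
  rewrite (@aff_conv _ _ _ T m (fun i => P (p i)) l (P x) affT Hs HPx k) Hx.
  by apply: eq_bigr => i _; rewrite TP.
have Hfg : forall y, MCHle V E D y -> P (T y) = y.
  move=> y [m [p [l [Hp Hl Hs Hy]]]]; apply/ffunP => k.
  have HT := HTy y m p l Hp Hs Hy.
  rewrite (@aff_conv _ _ _ P m (fun i => liftv (p i)) l (T y) affP Hs HT k) Hy.
  by apply: eq_bigr => i _; rewrite /P P_lift.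
have Hdot : forall x, dotv (projle V E D a) (P x) = dotv a x.
  move=> x; rewrite /dotv.
  under eq_bigr do rewrite !ffunE.
  under [RHS]eq_bigr do rewrite -!coordE.
  rewrite (sum_idx (JHle V E D) (fun S => Defs.coord a S * Defs.coord x S)).
  rewrite (sum_idx (JH V E) (fun S => Defs.coord a S * Defs.coord x S)).
  rewrite [LHS]big_mkcond [RHS]big_mkcond; apply: eq_bigr => S _.
  case: (boolP (S \in JHle V E D)) => HS; first by rewrite (JHle_JH HS).
  case: (boolP (S \in JH V E)) => HS' //.
  rewrite (coordS a HS').
  have /eqP -> : a (Sub S HS') == 0.
    apply/negPn/negP => Hne; have := Hsupp _ Hne; by rewrite /= (negbTE HS).
  by rewrite mul0r.
have HXY' : forall x, (MCH V E x /\ dotv a x = delta) ->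
    (MCHle V E D (P x) /\ dotv (projle V E D a) (P x) = delta).
  by move=> x [Hx Ha]; split; [exact: HXY | rewrite Hdot].
have HYX' : forall y, (MCHle V E D y /\ dotv (projle V E D a) y = delta) ->
    (MCH V E (T y) /\ dotv a (T y) = delta).
  by move=> y [Hy Ha]; split; [exact: HYX | rewrite -Hdot Hfg].
split.
- move=> [_ [d [Hd Hf]]]; split.
    by move=> y Hy; rewrite -(Hfg y Hy) Hdot; apply: Hvalid; apply: HYX.
  exists d; split.
    exact: (@has_dim_transfer _ _ _ _ _ P T d affP affT HXY HYX Hgf Hfg Hd).
  apply: (@has_dim_transfer _ _ _ _ _ P T (d - 1) affP affT HXY' HYX' _ _ Hf).
    by move=> x [Hx _]; exact: Hgf.
  by move=> y [Hy _]; exact: Hfg.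
- move=> [_ [d [Hd Hf]]]; split => //.
  exists d; split.
    exact: (@has_dim_transfer _ _ _ _ _ T P d affT affP HYX HXY Hfg Hgf Hd).
  apply: (@has_dim_transfer _ _ _ _ _ T P (d - 1) affT affP HYX' HXY' _ _ Hf).
    by move=> y [Hy _]; exact: Hfg.
  by move=> x [Hx _]; exact: Hgf.
Qed.
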